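(* Let $\langle A,\to\rangle$ be a conditional algebra. For $a\in A$ let $Q_a$, $[Q_a]$ be defined as in the context, and for $U,V\subseteq\mathrm{Ul}(A)$ let $\Box_U(V)=U\to_{T_A}V$. Then: (1) for every $a\in A$, $[Q_a]=\Box_{\varphi(a)}$; (2) for all $U,V\subseteq\mathrm{Ul}(A)$, $$\Box_U(V)=\bigcap_{(Y,O)}\ \bigcup_{\substack{a\in F_Y,\ b\in I_O}}\Box_{\varphi(a)}(\varphi(b))=\bigcap_{(Y,O)}\ \bigcup_{a\in F_Y}[Q_a](O),$$ where $(Y,O)$ ranges over pairs with $Y\subseteq U$ closed and $O\supseteq V$ open in the Stone space of $A$, $F_Y=\{a\in A: Y\subseteq\varphi(a)\}$ and $I_O=\{b\in A:\varphi(b)\subseteq O\}$.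
   Context: A conditional algebra is a pair $\langle A,\to\rangle$ where $A$ is a Boolean algebra and $\to$ is a binary operation with, for all $a,b,c$: $a\to 1=1$; $(a\to b)\wedge(a\to c)=a\to(b\wedge c)$; $(a\vee b)\to c\le (a\to c)\wedge(b\to c)$. $\mathrm{Ul}(A)$ is the Stone space of ultrafilters, $\varphi(a)=\{u:a\in u\}$; filters include the improper filter $A$, and $\varphi(F)=\{u:F\subseteq u\}$. $D^{\to}_X(Y)=\{b:\exists a\in Y,\ a\to b\in X\}$. $T_A(u,Z,v)$ iff there is a filter $F$ with $Z=\varphi(F)$ and $D^{\to}_u(F)\subseteq v$; $T_A(u,Z)=\{v:T_A(u,Z,v)\}$; $U\to_{T_A}V=\{u:\forall Z\subseteq U,\ T_A(u,Z)\subseteq V\}$. For $a\in A$: $Q_a(u,v)$ iff $\{b\in A: a\to b\in u\}\subseteq v$; $Q_a(u)=\{v:Q_a(u,v)\}$; $[Q_a](X)=\{u:Q_a(u)\subseteq X\}$ for $X\subseteq\mathrm{Ul}(A)$. *)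

(* Defs.v *)
From mathcomp Require Import all_boot all_order.
Set Implicit Arguments. Unset Strict Implicit. Unset Printing Implicit Defensive.
Import Order.Theory.
Local Open Scope order_scope.

(* Boolean algebras are MathComp's complemented distributive lattices with
   top and bottom: ctbDistrLatticeType d. *)

Section CondAlg.
Context {disp : Order.disp_t} {A : ctbDistrLatticeType disp}.

Definition is_conditional (imp : A -> A -> A) : Prop :=
  [/\ forall a, imp a \top = \top,
      forall a b c, imp a b `&` imp a c = imp a (b `&` c)
    & forall a b c, imp (a `|` b) c <= imp a c `&` imp b c].

(* Filters (the improper filter A is allowed). *)
Definition is_filter (F : A -> Prop) : Prop :=
  [/\ F \top,
      forall a b, F a -> a <= b -> F b
    & forall a b, F a -> F b -> F (a `&` b)].

Definition is_ultrafilter (u : A -> Prop) : Prop :=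
  [/\ is_filter u, ~ u \bot &
      forall G, is_filter G -> ~ G \bot -> (forall a, u a -> G a) ->
        forall a, G a -> u a].

Definition Ul := {u : A -> Prop | is_ultrafilter u}.

Definition uset := Ul -> Prop.

Definition subU (X Y : uset) : Prop := forall u, X u -> Y u.

Definition phi (a : A) : uset := fun u => proj1_sig u a.
Definition phiF (F : A -> Prop) : uset :=
  fun u => forall x, F x -> proj1_sig u x.

Definition is_open (O : uset) : Prop :=
  forall u, O u -> exists b, phi b u /\ subU (phi b) O.
Definition is_closed (Y : uset) : Prop := is_open (fun u => ~ Y u).

Variable imp : A -> A -> A.

Definition Dimp (u : Ul) (F : A -> Prop) : A -> Prop :=
  fun b => exists a, F a /\ proj1_sig u (imp a b).

Definition TA (u : Ul) (Z : uset) (v : Ul) : Prop :=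
  exists F, is_filter F /\ (forall w, Z w <-> phiF F w) /\
            (forall b, Dimp u F b -> proj1_sig v b).

Definition arrT (U V : uset) : uset :=
  fun u => forall Z, subU Z U -> forall v, TA u Z v -> V v.

Definition Box (U V : uset) : uset := arrT U V.

Definition Qa (a : A) (u v : Ul) : Prop :=
  forall b, proj1_sig u (imp a b) -> proj1_sig v b.
Definition boxQ (a : A) (X : uset) : uset :=
  fun u => forall v, Qa a u v -> X v.

End CondAlg.

(* Main.v *)
Require Import Defs.
From mathcomp Require Import all_boot all_order.
From mathcomp Require Import boolp classical_sets.
Local Open Scope order_scope.
Import Order.Theory.

Section S.
Context {disp : Order.disp_t} {A : ctbDistrLatticeType disp}.

Lemma gen_filter (F : A -> Prop) (c : A) : is_filter F ->
  is_filter (fun z => exists f, F f /\ f `&` c <= z).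
Proof.
case=> F1 Fup FI; split.
- by exists \top; split => //; exact: lex1.
- move=> a b [f [Ff le]] ab; exists f; split => //; exact: le_trans ab.
- move=> a b [f [Ff lf]] [g [Fg lg]]; exists (f `&` g); split; first exact: FI.
  rewrite lexI; apply/andP; split.
  + apply: le_trans lf; apply: leI2 => //; exact: leIl.
  + apply: le_trans lg; apply: leI2 => //; exact: leIr.
Qed.

Lemma UL (G : A -> Prop) : is_filter G -> ~ G \bot ->
  exists w : Ul, forall x, G x -> proj1_sig w x.
Proof.
move=> fG nG.
pose P := fun H : set A => H = set0 \/ (is_filter H /\ ~ H \bot /\ (forall x, G x -> H x)).
have PP : forall H x, P H -> H x -> is_filter H /\ ~ H \bot /\ (forall x, G x -> H x).
  move=> H x [->|//] //.
have [A0 [PA0 maxA0]] : exists A0, P A0 /\ forall B, proper A0 B -> ~ P B.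
  apply: Zorn_bigcup => F FP tot.
  case: (pselect (exists X, F X /\ exists x, X x)) => [[X0 [FX0 [x0 X0x0]]]|nE].
  - have [[X01 _ _] [_ GX0]] := PP _ _ (FP _ FX0) X0x0.
    right; split; [split|split].
    + by exists X0.
    + move=> a b [X FX Xa] ab; exists X => //.
      by have [[_ up _] _] := PP _ _ (FP _ FX) Xa; exact: up Xa ab.
    + move=> a b [X FX Xa] [Y FY Yb].
      have [XY|YX] := tot _ _ FX FY.
      * exists Y => //; have [[_ _ I] _] := PP _ _ (FP _ FY) Yb; apply: I => //.
        exact: XY.
      * exists X => //; have [[_ _ I] _] := PP _ _ (FP _ FX) Xa; apply: I => //.
        exact: YX.
    + by move=> [X FX Xb]; have [_ [nb _]] := PP _ _ (FP _ FX) Xb.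
    + by move=> x Gx; exists X0 => //; exact: GX0.
  - left; apply/funext => x; apply/propext; split => //.
    by move=> [X FX Xx]; apply: nE; exists X; split => //; exists x.
have A0top : A0 \top.
  case: PA0 => [A0E|[[]] //]; exfalso.
  apply: (maxA0 G); last by right; split => //; split.
  split; first by rewrite A0E.
  by move=> /(_ \top); case: fG => G1 _ _; rewrite A0E; apply.
have [fA0 [nA0 GA0]] := PP _ _ PA0 A0top.
have uA0 : is_ultrafilter A0.
  split => // G' fG' nG' sub a G'a.
  case: (pselect (forall x, G' x -> A0 x)) => [h|h]; first exact: h.
  exfalso; apply: (maxA0 G'); first by split.
  by right; split => //; split => // x /GA0 /sub.
by exists (exist _ A0 uA0) => x /GA0.
Qed.

Section U.
Variable w : @Ul _ A.
Let W := proj1_sig w.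
Lemma ultF : is_filter W. Proof. by case: (proj2_sig w). Qed.
Lemma ult_nb : ~ W \bot. Proof. by case: (proj2_sig w). Qed.
Lemma ult_up a b : W a -> a <= b -> W b.
Proof. by case: ultF => _ h _; apply: h. Qed.
Lemma ult_I a b : W a -> W b -> W (a `&` b).
Proof. by case: ultF => _ _ h; apply: h. Qed.
Lemma ult_top : W \top. Proof. by case: ultF. Qed.
Lemma ult_not_both x : W x -> W (~` x) -> False.
Proof. by move=> h1 h2; apply: ult_nb; rewrite -(meetxC x); exact: ult_I. Qed.
Lemma ult_compl x : W x \/ W (~` x).
Proof.
case: (pselect (W x)) => [|nx]; [by left|right].
have fG := @gen_filter W x ultF.
case: (pselect ((fun z => exists f, W f /\ f `&` x <= z) \bot)) => [[y [Wy le]]|nb].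
  apply: ult_up Wy _; rewrite -disj_leC -lex0 //.
exfalso; apply: nx.
case: (proj2_sig w) => _ _ mx; apply: (mx _ fG nb).
  by move=> a Wa; exists a; split => //; exact: leIl.
by exists \top; split; [exact: ult_top| rewrite meet1x].
Qed.
Lemma ult_prime x y : W (x `|` y) -> W x \/ W y.
Proof.
move=> h; case: (ult_compl x) => [|nx]; [by left|right].
apply: ult_up (ult_I _ _ h nx) _.
by rewrite meetUl meetxC join0x; exact: leIl.
Qed.
End U.
Arguments ultF {w}. Arguments ult_nb {w}. Arguments ult_up {w a b}. Arguments ult_I {w a b}. Arguments ult_top {w}. Arguments ult_not_both {w}. Arguments ult_prime {w x y}.

Lemma separation (F : A -> Prop) a : is_filter F ->
  (forall w : Ul, phiF F w -> phi a w) -> F a.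
Proof.
move=> fF h; case: (pselect (F a)) => // nFa; exfalso.
have fG := @gen_filter F (~` a) fF.
have [w Hw] : exists w : Ul, forall x,
    (fun z => exists f, F f /\ f `&` ~` a <= z) x -> proj1_sig w x.
  apply: UL => // -[f [Ff le]]; apply: nFa.
  have : f <= ~` ~` a by rewrite -disj_leC -lex0.
  by rewrite complK; case: fF => _ up _; apply: up.
apply: (@ult_not_both w a).
  by apply: h => x Fx; apply: Hw; exists x; split => //; exact: leIl.
by apply: Hw; exists \top; split; [case: fF|rewrite meet1x].
Qed.

Lemma Ul_eq (w v : @Ul _ A) : (forall x, proj1_sig w x -> proj1_sig v x) -> w = v.
Proof.
move=> h.
have e : proj1_sig w = proj1_sig v.
  apply/funext => x; apply/propext; split; first exact: h.
  case: (proj2_sig w) => _ _ mx; apply: mx => //; case: (proj2_sig v) => //.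
case: w v h e => [w pw] [v pv] /= _ e; subst v.
by congr exist; apply: Prop_irrelevance.
Qed.

Variable imp : A -> A -> A.
Hypothesis Hc : is_conditional imp.

Lemma imp_anti a a' c : a <= a' -> imp a' c <= imp a c.
Proof.
case: Hc => _ _ h3 le; have := h3 a a' c; rewrite join_r // => h.
by apply: le_trans h _; exact: leIl.
Qed.

Lemma imp_mono a b c : b <= c -> imp a b <= imp a c.
Proof.
case: Hc => _ h2 _ le; rewrite -(meet_l le) -h2; exact: leIr.
Qed.

Lemma Dfilter (u : Ul) F : is_filter F -> is_filter (Dimp imp u F).
Proof.
case=> F1 Fup FI; split.
- exists \top; split => //; case: Hc => -> _ _; exact: ult_top.
- move=> a b [x [Fx ux]] ab; exists x; split => //.
  by apply: ult_up ux _; exact: imp_mono.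
- move=> a b [x [Fx ux]] [y [Fy uy]]; exists (x `&` y); split; first exact: FI.
  case: Hc => _ <- _; apply: ult_I.
  + by apply: ult_up ux _; apply: imp_anti; exact: leIl.
  + by apply: ult_up uy _; apply: imp_anti; exact: leIr.
Qed.

Lemma part1 a X u : boxQ imp a X u <-> Box imp (phi a) X u.
Proof.
split.
- move=> h Z ZU v [F [fF [ZF Dv]]]; apply: h => b uab; apply: Dv.
  exists a; split => //; apply: separation => // w /ZF /ZU //.
- move=> h v Q; apply: (h (phi a)) => //.
  exists (fun x => a <= x); split; [split|split].
  + exact: lex1.
  + by move=> x y ax xy; exact: le_trans xy.
  + by move=> x y ax ay; rewrite lexI ax ay.
  + move=> w; split; first by move=> wa x ax; exact: ult_up wa ax.
    by move=> /(_ a (lexx a)).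
  + move=> b [x [ax ux]]; apply: Q; apply: ult_up ux _; exact: imp_anti.
Qed.

Lemma forward U V u : Box imp U V u ->
  forall Y O : uset, is_closed Y -> subU Y U -> is_open O -> subU V O ->
    exists a b, subU Y (phi a) /\ subU (phi b) O /\ Box imp (phi a) (phi b) u.
Proof.
move=> hB Y O cY YU oO VO.
pose FY := fun a => subU Y (phi a).
have fFY : is_filter FY.
  split.
  - move=> w _; exact: ult_top.
  - by move=> a b h ab w /h wa; exact: ult_up wa ab.
  - by move=> a b ha hb w Yw; apply: ult_I; [apply: ha|apply: hb].
have YE : forall w, Y w <-> phiF FY w.
  move=> w; split; first by move=> Yw x; apply.
  move=> h; case: (pselect (Y w)) => // nY; exfalso.
  have [b [wb sb]] := cY w nY.
  apply: (@ult_not_both w b) => //; apply: h => w' Yw'.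
  by case: (ult_compl w' b) => // /sb.
pose D := Dimp imp u FY.
have fD := @Dfilter u FY fFY.
have DO : forall w : Ul, (forall x, D x -> proj1_sig w x) -> O w.
  by move=> w hw; apply: VO; apply: (hB Y YU); exists FY.
pose G := fun x => exists d b, D d /\ subU (phi b) O /\ d `&` ~` b <= x.
have fG : is_filter G.
  split.
  - exists \top, \bot; split; first by case: fD.
    split; last exact: lex1.
    by move=> w /=; rewrite /phi => /ult_nb.
  - move=> x y [d [b [Dd [Ob le]]]] xy; exists d, b; split => //; split => //.
    exact: le_trans xy.
  - move=> x y [d [b [Dd [Ob le]]]] [d' [b' [Dd' [Ob' le']]]].
    exists (d `&` d'), (b `|` b'); split; first by case: fD => _ _; apply.
    split.
      by move=> w /ult_prime [/Ob|/Ob'].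
    rewrite complU lexI; apply/andP; split.
    + apply: le_trans le; apply: leI2; exact: leIl.
    + apply: le_trans le'; apply: leI2; exact: leIr.
have [d [b [Dd [Ob le]]]] : G \bot.
  case: (pselect (G \bot)) => // nG; exfalso.
  have [w Hw] := @UL G fG nG.
  have Ow : O w.
    apply: DO => x Dx; apply: Hw; exists x, \bot; split => //; split.
      by move=> w' /ult_nb.
    by rewrite compl0 meetx1.
  have [b [wb sb]] := oO w Ow.
  apply: (@ult_not_both w b) => //; apply: Hw; exists \top, b; split.
    by case: fD.
  by split => //; rewrite meet1x.
have Db : D b.
  have : d <= ~` ~` b by rewrite -disj_leC -lex0.
  by rewrite complK; case: fD => _ up _; apply: up.
have [a [FYa uab]] := Db.
exists a, b; split => //; split => //.
by apply/part1 => v Q; apply: Q.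
Qed.

Lemma backward U V u :
  (forall Y O : uset, is_closed Y -> subU Y U -> is_open O -> subU V O ->
     exists a, subU Y (phi a) /\ boxQ imp a O u) -> Box imp U V u.
Proof.
move=> H Z ZU v [F [fF [ZF Dv]]].
case: (pselect (V v)) => // nV; exfalso.
have cZ : is_closed Z.
  move=> w nZ.
  have [x [Fx nwx]] : exists x, F x /\ ~ proj1_sig w x.
    apply: contrapT => nex; apply: nZ; apply/ZF => x Fx.
    by apply: contrapT => nwx; apply: nex; exists x.
  exists (~` x); split; first by case: (ult_compl w x).
  by move=> w' w'x /ZF /(_ x Fx) h; exact: (ult_not_both x h w'x).
have oO : is_open (fun w => w <> v).
  move=> w nwv.
  have [x [wx nvx]] : exists x, proj1_sig w x /\ ~ proj1_sig v x.
    apply: contrapT => nex; apply: nwv; apply: Ul_eq => x wx.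
    by apply: contrapT => nvx; apply: nex; exists x.
  by exists x; split => // w' w'x e; subst w'.
have [a [Za Qa]] := H Z (fun w => w <> v) cZ ZU oO
  (fun w Vw e => ltac:(by subst w)).
have Fa : F a by apply: separation => // w /ZF /Za.
by apply: (Qa v) => // c uac; apply: Dv; exists a.
Qed.

End S.

Theorem theorem3p9 (disp : Order.disp_t) (A : ctbDistrLatticeType disp)
  (imp : A -> A -> A) (Hc : is_conditional imp) :
  (forall (a : A) (X : @uset _ A) (u : Ul),
     boxQ imp a X u <-> Box imp (phi a) X u) /\
  (forall (U V : @uset _ A) (u : Ul),
     (Box imp U V u <->
       (forall Y O : uset, is_closed Y -> subU Y U -> is_open O -> subU V O ->
          exists a b, subU Y (phi a) /\ subU (phi b) O /\
                      Box imp (phi a) (phi b) u)) /\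
     (Box imp U V u <->
       (forall Y O : uset, is_closed Y -> subU Y U -> is_open O -> subU V O ->
          exists a, subU Y (phi a) /\ boxQ imp a O u))).
Proof.
have R12 : forall (U V : @uset _ A) (u : Ul),
    (forall Y O : uset, is_closed Y -> subU Y U -> is_open O -> subU V O ->
          exists a b, subU Y (phi a) /\ subU (phi b) O /\
                      Box imp (phi a) (phi b) u) ->
    (forall Y O : uset, is_closed Y -> subU Y U -> is_open O -> subU V O ->
          exists a, subU Y (phi a) /\ boxQ imp a O u).
  move=> U V u h Y O cY YU oO VO.
  have [a [b [Ya [bO Bab]]]] := h Y O cY YU oO VO.
  exists a; split => // v Qv; apply: bO; exact: (proj2 (@part1 _ _ imp Hc a (phi b) u) Bab v Qv).
split; first exact: part1.
move=> U V u; split; split.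
- exact: forward.
- by move=> h; apply: backward => //; apply: R12.
- by move=> h; apply: R12; exact: forward.
- exact: backward.
Qed.
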